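(* For an integer $n\ge 3$, $$l_0^{(n-1)^3}(n^3)=\begin{cases}11, & n=3,\\ (n-1)^3+2, & n\ge 4.\end{cases}$$
   Context: For a positive integer $d$ and integer $m$, define $$u_0^d(m)=\binom{m-\lfloor \frac{d}{2}\rfloor -1}{\lfloor \frac{d-1}{2}\rfloor}+\binom{m-\lfloor \frac{d-1}{2}\rfloor -1}{\lfloor \frac{d}{2}\rfloor},$$ where $\binom{a}{b}=0$ when $a<b$; and for a number $x$, $l_0^d(x)=k$ if and only if $k$ is the integer with $u_0^d(k-1)<x\le u_0^d(k)$. *)

(* Defs.v *)
From mathcomp Require Import all_boot all_order all_algebra.
Set Implicit Arguments. Unset Strict Implicit. Unset Printing Implicit Defensive.
Import Order.TTheory GRing.Theory Num.Theory.
Local Open Scope ring_scope.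

Definition binz (a : int) (b : nat) : nat :=
  if a < b%:Z then 0%N else 'C(`|a|%N, b).

Definition u0 (d : nat) (m : int) : nat :=
  (binz (m - (d./2)%:Z - 1) (d.-1)./2 + binz (m - ((d.-1)./2)%:Z - 1) d./2)%N.

(* l_0^d(x) = k  iff  u_0^d(k-1) < x <= u_0^d(k). *)
Definition l0_is (d x : nat) (k : int) : Prop :=
  (u0 d (k - 1) < x <= u0 d k)%N.

(* Main.v *)
Require Import Defs.
From mathcomp Require Import all_boot all_order all_algebra zify.
Import Order.TTheory GRing.Theory Num.Theory.
Local Open Scope ring_scope.

Lemma binzE (t b : nat) : binz t%:Z b = 'C(t, b).
Proof.
rewrite /binz ltz_nat; case: ltnP => h //; by rewrite bin_small.
Qed.

Lemma binz_mono (z z' : int) b : z <= z' -> (binz z b <= binz z' b)%N.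
Proof.
move=> h; rewrite /binz; case: ifP => // h1.
have h2 : ~~ (z' < b%:Z) by move/negbT: h1; rewrite -!leNgt => h1; exact: le_trans h.
rewrite (negbTE h2); apply: leq_bin2l.
move/negbT: h1; rewrite -leNgt => h1.
lia.
Qed.

Lemma u0_mono d (m m' : int) : m <= m' -> (u0 d m <= u0 d m')%N.
Proof.
move=> h; rewrite /u0; apply: leq_add; apply: binz_mono; lia.
Qed.

Lemma uniq_l0 d x (K : int) : (u0 d (K - 1) < x <= u0 d K)%N ->
  forall k, l0_is d x k <-> k = K.
Proof.
move=> /andP[h1 h2] k; split; last by move=> ->; rewrite /l0_is h1 h2.
rewrite /l0_is => /andP[h3 h4].
case: (ltgtP k K) => // hk.
- have := @u0_mono d k (K - 1); lia.
- have := @u0_mono d K (k - 1); lia.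
Qed.

Lemma binC2 x : ('C(x.+2, x) * 2 = x.+2 * x.+1)%N.
Proof.
have := @bin_sub x.+2 2 isT; rewrite subSS subSS subn0 => ->.
have := mul_bin_diag x.+2 1; rewrite bin1 /=; lia.
Qed.

Lemma val3 : l0_is 8 27 11 /\ True.
Proof. split => //. Qed.

Lemma big_ineq t : (3 <= t)%N -> (8 * (t.+1) ^ 3 <= (t ^ 3).+1 * (t ^ 3).+3)%N.
Proof. move=> h. nia. Qed.

Lemma odd_case a x : (2 * a + 2 < x)%N -> (4 * x <= (2*a+2) * (2*a+4))%N ->
  forall k, l0_is (2 * a + 1)%N x k <-> k = ((2 * a + 1) + 2)%N%:Z.
Proof.
move=> h1 h2; apply: uniq_l0.
have ha : (2 * a + 1)./2 = a by rewrite mul2n addn1 /= uphalf_double.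
have hb : (2 * a + 1).-1./2 = a by rewrite addn1 /= mul2n half_double.
rewrite /u0 ha hb.
have -> : (2 * a + 1 + 2)%N%:Z - 1 - a%:Z - 1 = (a.+1)%:Z by lia.
have -> : (2 * a + 1 + 2)%N%:Z - a%:Z - 1 = (a.+2)%:Z by lia.
rewrite !binzE binSn.
have := binC2 a; move: ('C(a.+2, a)) => c hc.
have e : ((2*a+2)*(2*a+4) = 4 * (a.+2 * a.+1))%N by nia.
rewrite e in h2; move: (a.+2 * a.+1)%N hc h2 => p hc h2; apply/andP; split; lia.
Qed.

Lemma even_case a x : (2 * a + 3 < x)%N -> (2 * x <= a.+3 * a.+2)%N ->
  forall k, l0_is (2 * a + 2)%N x k <-> k = ((2 * a + 2) + 2)%N%:Z.
Proof.
move=> h1 h2; apply: uniq_l0.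
have ha : (2 * a + 2)./2 = a.+1 by rewrite mul2n addn2 /= half_double.
have hb : (2 * a + 2).-1./2 = a by rewrite addn2 /= mul2n uphalf_double.
rewrite /u0 ha hb.
have -> : (2 * a + 2 + 2)%N%:Z - 1 - a.+1%:Z - 1 = (a.+1)%:Z by lia.
have -> : (2 * a + 2 + 2)%N%:Z - 1 - a%:Z - 1 = (a.+2)%:Z by lia.
have -> : (2 * a + 2 + 2)%N%:Z - a.+1%:Z - 1 = (a.+2)%:Z by lia.
have -> : (2 * a + 2 + 2)%N%:Z - a%:Z - 1 = (a.+3)%:Z by lia.
rewrite !binzE !binSn.
have := binC2 a.+1; move: ('C(a.+3, a.+1)) => c hc.
move: (a.+3 * a.+2)%N hc h2 => p hc h2.
have : ('C(a.+2, a) >= 0)%N by []. lia.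
Qed.

Theorem corollary7 (n : nat) (hn : (3 <= n)%N) :
  forall k : int,
    l0_is ((n - 1) ^ 3)%N (n ^ 3)%N k <->
    k = (if n == 3%N then 11%N else ((n - 1) ^ 3 + 2)%N)%:Z.
Proof.
case: eqP => [-> | hn3].
  by apply: uniq_l0; vm_compute.
have ht : (3 <= n - 1)%N by lia.
have hb := @big_ineq (n - 1) ht.
have hn1 : (n - 1).+1 = n by lia.
rewrite hn1 in hb.
have hx : ((n - 1) ^ 3 + 1 < n ^ 3)%N.
  move: ht; move: (n - 1)%N hn1 => t <- ht; nia.
move: hb hx; move: ((n - 1) ^ 3)%N => d hb hx.
have hd := odd_double_half d.
case ho: (odd d) in hd.
- set a := d./2 in hd.
  have -> : d = (2 * a + 1)%N by lia.
  apply: odd_case; nia.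
- set a := (d./2).-1 in hd.
  have ha : (1 <= d./2)%N.
    case: (d./2) hd hx hb => //= <-. lia.
  have -> : d = (2 * a + 2)%N by lia.
  apply: even_case; nia.
Qed.
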